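(* Let $\mu>0$ be a constant and suppose $\mu n$ balls are placed independently and uniformly at random into $n$ bins. Let $x>1$, $k\ge 1$ and $j\in[n]$. Then with probability $1-2^{-\Omega(k)}$, for every interval $I\subseteq[n]$ of bins with $j\in I$, the number of balls in the bins of $I$ is at most $(1+1/x)|I|\mu + xk$.
   Context: $[n]=\{1,\dots,n\}$; an interval is a set of consecutive indices $\{a,a+1,\dots,b\}$. The constant in $\Omega(k)$ does not depend on $x,k,n,j$. *)

(* Defs.v *)
From HB Require Import structures.
From mathcomp Require Import all_boot all_order all_algebra.
From mathcomp Require Import reals exp.
Set Implicit Arguments. Unset Strict Implicit. Unset Printing Implicit Defensive.
Import Order.TTheory GRing.Theory Num.Theory.
Local Open Scope ring_scope.

(* Outcomes of throwing m balls into n bins: f i = bin of ball i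
   (bins indexed 0..n-1, i.e. bin t here is bin t+1 of the paper).
   The probability space is uniform on {ffun 'I_m -> 'I_n}. *)

Definition load (m n : nat) (f : {ffun 'I_m -> 'I_n}) (a b : nat) : nat :=
  #|[set i : 'I_m | (a <= f i <= b)%N]|.

Definition all_intervals_ok (R : realType) (m n : nat) (mu x k : R) (j : 'I_n)
    (f : {ffun 'I_m -> 'I_n}) : bool :=
  [forall a : 'I_n, forall b : 'I_n,
     ((a <= j)%N && (j <= b)%N) ==>
     ((load f a b)%:R <= (1 + x^-1) * (b - a + 1)%:R * mu + x * k)].

Definition balls_prob (R : realType) (m n : nat)
    (E : pred {ffun 'I_m -> 'I_n}) : R :=
  #|[set f | E f]|%:R / #|{ffun 'I_m -> 'I_n}|%:R.

(* Main.v *)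
Require Import Defs.
From HB Require Import structures.
From mathcomp Require Import all_boot all_order all_algebra.
From mathcomp Require Import reals exp.
From mathcomp Require Import sequences.
From mathcomp Require Import ring lra zify.
Set Implicit Arguments. Unset Strict Implicit. Unset Printing Implicit Defensive.
Import Order.TTheory GRing.Theory Num.Theory.
Local Open Scope ring_scope.

Section Transfer.
Variables (R : realType) (m n : nat).

Lemma prod_ind (g : {ffun 'I_m -> 'I_n}) (f : {ffun 'I_m -> 'I_n}) (pi : 'I_n -> 'I_n) :
  \prod_(i : 'I_m) ((pi (f i) == g i)%:R : R) = ([ffun i => pi (f i)] == g)%:R.
Proof.
have [/ffunP E|NE] := eqVneq.
  by rewrite big1 // => i _; rewrite -E ffunE eqxx.
case: (pickP (fun i => pi (f i) != g i)) => [i Hi|H].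
  by rewrite (bigD1 i) //= (negPf Hi) mul0r.
case/eqP: NE; apply/ffunP => i; rewrite ffunE; apply/eqP; have := H i; by move/negbT; rewrite negbK.
Qed.

Lemma transfer (pi : 'I_n -> 'I_n) (w1 w2 : 'I_n -> R) (F : {ffun 'I_m -> 'I_n} -> R) :
  (forall z, \sum_y (pi y == z)%:R * w1 y = \sum_y (pi y == z)%:R * w2 y) ->
  (forall f, F f = F [ffun i => pi (f i)]) ->
  \sum_(f : {ffun 'I_m -> 'I_n}) F f * \prod_(i : 'I_m) w1 (f i) = \sum_(f : {ffun 'I_m -> 'I_n}) F f * \prod_(i : 'I_m) w2 (f i).
Proof.
move=> Hw HF.
have key : forall w : 'I_n -> R, \sum_(f : {ffun 'I_m -> 'I_n}) F f * \prod_(i : 'I_m) w (f i) =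
   \sum_(g : {ffun 'I_m -> 'I_n}) F g * \prod_(i : 'I_m) \sum_y (pi y == g i)%:R * w y.
  move=> w.
  transitivity (\sum_(f : {ffun 'I_m -> 'I_n}) \sum_(g : {ffun 'I_m -> 'I_n}) ([ffun i => pi (f i)] == g)%:R * (F g * \prod_(i : 'I_m) w (f i))).
    apply: eq_bigr => f _.
    rewrite (bigD1 [ffun i => pi (f i)]) //= eqxx mul1r -HF [X in _ + X]big1 ?addr0 //.
    by move=> g /negPf Hg; rewrite eq_sym Hg mul0r.
  rewrite exchange_big /=; apply: eq_bigr => g _.
  rewrite bigA_distr_bigA mulr_sumr; apply: eq_bigr => f _.
  rewrite big_split /= prod_ind; ring.
by rewrite !key; apply: eq_bigr => g _; congr (_ * _); apply: eq_bigr => i _.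
Qed.
End Transfer.
Section Doob.
Variables (R : realType) (m n : nat) (rho : 'I_n -> nat) (y0 : 'I_n) (C t : R) (N : nat).
Hypothesis hy0 : rho y0 = 0%N.
Hypothesis hC : 0 <= C.
Hypothesis hcard : forall L, (L <= N)%N -> #|[pred y | (rho y < L)%N]| = L.
Local Notation FF := {ffun 'I_m -> 'I_n}.
Variable H : nat -> pred FF.

Definition wt L y : R := if (rho y < L)%N then 1 + C / L%:R else 1.
Definition Zp L (f : FF) : R := \prod_(i : 'I_m) wt L (f i).
Definition cpi L y := if (rho y < L)%N then y0 else y.
Definition col L (f : FF) : FF := [ffun i => cpi L (f i)].
Definition meas L (B : FF -> bool) := forall f, B f = B (col L f).
Definition hit L f := has (fun l => H l f) (iota 1 L).

Hypothesis Hmeas : forall L, (1 <= L <= N)%N -> meas L (H L).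
Hypothesis HZ : forall L f, (1 <= L <= N)%N -> H L f -> t <= Zp L f.

Lemma wt_ge0 L y : 0 <= wt L y.
Proof. rewrite /wt; case: ifP => _ //; rewrite addr_ge0 // divr_ge0 //. Qed.

Lemma Zp_ge0 L f : 0 <= Zp L f.
Proof. by apply: prodr_ge0 => i _; apply: wt_ge0. Qed.

Lemma meas_mono L B : meas L.+1 B -> meas L B.
Proof.
move=> HB f; rewrite HB [in RHS]HB; congr B; apply/ffunP => i; rewrite !ffunE /cpi.
case: (boolP (rho (f i) < L)%N) => h //.
by rewrite hy0 /=; have -> : (rho (f i) < L.+1)%N by apply: ltnW.
Qed.

Lemma cnt K : (K <= N)%N -> \sum_y ((rho y < K)%N)%:R = K%:R :> R.
Proof.
move=> hK; rewrite -natr_sum; congr (_%:R).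
rewrite -[in RHS](hcard hK) -sum1_card [in RHS]big_mkcond /=; apply: eq_bigr => y _.
by rewrite inE; case: ifP.
Qed.

Lemma fiber L z : (1 <= L)%N -> (L.+1 <= N)%N ->
  \sum_y (cpi L.+1 y == z)%:R * wt L y = \sum_y (cpi L.+1 y == z)%:R * wt L.+1 y.
Proof.
move=> h1 hN; apply/eqP; rewrite -subr_eq0 -sumrB.
have pw : forall y, (cpi L.+1 y == z)%:R * wt L y - (cpi L.+1 y == z)%:R * wt L.+1 y
   = (y0 == z)%:R * (((rho y < L)%N)%:R * (C / L%:R) - ((rho y < L.+1)%N)%:R * (C / L.+1%:R)).
  move=> y; rewrite /cpi /wt; case: (ltnP (rho y) L) => h.
    have h' : (rho y < L.+1)%N by apply: ltnW.
    by rewrite h' /=; ring.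
  by case: (ltnP (rho y) L.+1) => h' /=; ring.
rewrite (eq_bigr _ (fun y _ => pw y)) -mulr_sumr sumrB -!mulr_suml cnt ?(ltnW hN) // cnt //.
rewrite !mulrA !(mulrC _%:R C) -!mulrA !divff ?mulr1 ?subrr ?mulr0 // pnatr_eq0 -?lt0n //.
Qed.

Lemma hit_S L f : hit L.+1 f = hit L f || H L.+1 f.
Proof.
rewrite /hit; have -> : iota 1 L.+1 = iota 1 L ++ [:: L.+1] by have := iotaD 1 L 1; rewrite addn1 add1n.
by rewrite has_cat /= orbF.
Qed.

Lemma martingale L (B : FF -> bool) : (1 <= L)%N -> (L.+1 <= N)%N -> meas L.+1 B ->
  \sum_f (B f)%:R * Zp L f = \sum_f (B f)%:R * Zp L.+1 f.
Proof.
move=> h1 hN HB; apply: (transfer (pi := cpi L.+1)).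
  by move=> z; apply: fiber.
by move=> f; rewrite -HB.
Qed.

Lemma doob L : (1 <= L <= N)%N -> forall B, meas L B ->
  t * \sum_(f : FF) ((B f) && hit L f)%:R <= \sum_f (B f)%:R * Zp L f.
Proof.
elim: L => [//|L IH] /andP[_ hLN] B HB.
case: (posnP L) => [L0|Lpos].
  subst L; rewrite mulr_sumr; apply: ler_sum => f _.
  rewrite /hit /= orbF; case: (B f) => /=; last by rewrite mul0r mulr0.
  case E: (H 1 f) => /=; last by rewrite mulr0 mul1r Zp_ge0.
  by rewrite mulr1 mul1r; apply: HZ.
pose B' f := B f && ~~ H L.+1 f.
have HB' : meas L.+1 B'.
  by move=> f; rewrite /B' -HB -Hmeas // hLN.
have hL : (1 <= L <= N)%N by rewrite Lpos (ltnW hLN).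
have IH' := IH hL B' (meas_mono HB').
have split1 : forall f, ((B f) && hit L.+1 f)%:R = ((B f) && H L.+1 f)%:R + ((B' f) && hit L f)%:R :> R.
  move=> f; rewrite hit_S /B'; case: (B f); case: (H L.+1 f); case: (hit L f) => //=; ring.
have split2 : forall f, (B f)%:R * Zp L.+1 f = ((B f) && H L.+1 f)%:R * Zp L.+1 f + (B' f)%:R * Zp L.+1 f.
  move=> f; rewrite /B'; case: (B f); case: (H L.+1 f) => //=; ring.
rewrite (eq_bigr _ (fun f _ => split1 f)) big_split mulrDr.
rewrite (eq_bigr _ (fun f _ => split2 f)) big_split.
apply: lerD.
  rewrite mulr_sumr; apply: ler_sum => f _.
  case E: (B f && H L.+1 f) => /=; last by rewrite mulr0 mul0r.
  by rewrite mulr1 mul1r; apply: HZ; [rewrite hLN | case/andP: E].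
by rewrite -(martingale Lpos hLN HB'); apply: IH'.
Qed.
End Doob.

Section Side.
Variables (R : realType) (m n : nat).
Local Notation FF := {ffun 'I_m -> 'I_n}.

Definition cntr (rho : 'I_n -> nat) L (f : FF) := #|[pred i | (rho (f i) < L)%N]|.

Lemma Zp_pow rho (C : R) L f : Zp rho C L f = (1 + C / L%:R) ^+ cntr rho L f.
Proof.
rewrite /Zp /wt -big_mkcond /= prodr_const; congr (_ ^+ _).

Qed.

Lemma sumZ rho (y0 : 'I_n) (C : R) N : (1 <= N)%N ->
  (forall L, (L <= N)%N -> #|[pred y | (rho y < L)%N]| = L) ->
  \sum_(f : FF) Zp rho C N f = (n%:R + C) ^+ m.
Proof.
move=> hN hcard.
rewrite /Zp -(bigA_distr_bigA (fun (_ : 'I_m) (y : 'I_n) => wt rho C N y)) /= prodr_const card_ord; congr (_ ^+ _).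
have -> : \sum_y wt rho C N y = \sum_(y : 'I_n) (1 + ((rho y < N)%N)%:R * (C / N%:R)).
  by apply: eq_bigr => y _; rewrite /wt; case: ifP => _ /=; rewrite ?mul1r ?mul0r ?addr0.
rewrite big_split /= sumr_const card_ord -mulr_suml.
have := @cnt R n rho N hcard N (leqnn N); rewrite /= => ->.
rewrite mulrCA divff ?mulr1 // pnatr_eq0 -lt0n //.

Qed.

Lemma ln_bound (y : R) : 0 <= y -> expR (y / (1 + y)) <= 1 + y.
Proof.
move=> hy.
have h1 : 0 < 1 + y by lra.
have := expR_ge1Dx (- (y / (1 + y))).
have -> : 1 + - (y / (1 + y)) = (1 + y)^-1 by field; lra.
rewrite expRN => h.
have hpos : 0 < expR (y / (1 + y)) := expR_gt0 _.
by rewrite lef_pV2 ?posrE in h.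
Qed.


Lemma sum_ind (P : pred FF) : \sum_(f : FF) ((P f)%:R : R) = #|[set f | P f]|%:R.
Proof.
rewrite -natr_sum; congr (_%:R).
rewrite -sum1_card [in RHS]big_mkcond /=; apply: eq_bigr => f _.
by rewrite inE; case: (P f).
Qed.
End Side.

Definition AA (R : realType) (x k : R) := x * k / 2.
Definition CC (R : realType) (mu x k : R) := AA x k / (2 * mu).
Definition ttv (R : realType) (x k : R) := expR ((1 + x^-1) * AA x k / 2).
Definition Hd (R : realType) (m n : nat) (mu x k : R) (rho : 'I_n -> nat) (L : nat)
  : pred {ffun 'I_m -> 'I_n} :=
  fun f => (1 + x^-1) * L%:R * mu + AA x k < (cntr rho L f)%:R.

Lemma CC_ge0 (R : realType) (mu x k : R) : 0 < mu -> 1 < x -> 0 <= k -> 0 <= CC mu x k.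
Proof. move=> *; rewrite /CC /AA; apply: divr_ge0; [apply: divr_ge0; [apply: mulr_ge0; lra | lra] | lra]. Qed.

Lemma Hd_meas (R : realType) (m n : nat) (mu x k : R) rho (y0 : 'I_n) L :
  rho y0 = 0%N -> (1 <= L)%N -> meas rho y0 L (@Hd R m n mu x k rho L).
Proof.
move=> hy0 hL f; rewrite /Hd /cntr; congr (_ < _%:R).
apply: eq_card => i; rewrite !inE ffunE /cpi; case: ifP => // _.
by rewrite hy0 hL.
Qed.

Lemma Hd_Z (R : realType) (m n : nat) (mu x k : R) rho L (f : {ffun 'I_m -> 'I_n}) :
  0 < mu -> 1 < x -> 0 <= k ->
  (1 <= L)%N -> Hd mu x k rho L f -> ttv x k <= Zp rho (CC mu x k) L f.
Proof.
move=> hmu hx hk hL; rewrite /Hd Zp_pow => hc.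
set c := cntr rho L f in hc *.
set y := CC mu x k / L%:R.
have hL' : 0 < L%:R :> R by rewrite ltr0n.
have hy : 0 <= y by apply: divr_ge0; [apply: CC_ge0 | apply: ltW].
have hLy : L%:R * y = CC mu x k by rewrite /y mulrCA divff ?mulr1 // gt_eqF.
have hmuC : mu * CC mu x k = AA x k / 2 by rewrite /CC; field; lra.
have hA : 0 <= AA x k by rewrite /AA; apply: divr_ge0; [apply: mulr_ge0 | ]; lra.
have he : 0 < x^-1 < 1.
  by rewrite invr_gt0 invf_lt1 ?(lt_trans ltr01) // hx andbT; lra.
apply: (@le_trans _ _ (expR (y / (1 + y)) ^+ c)); last first.
  by apply: lerXn2r; rewrite ?nnegrE ?expR_ge0 //; [lra | apply: ln_bound].
rewrite -expRM_natl /ttv ler_expR.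
have h1y : 0 < 1 + y by lra.
rewrite mulrA ler_pdivlMr //.
set e := x^-1 in he hc *.
set A := AA x k in hA hmuC hc *.
have hc' : (1 + e) * L%:R * mu + A <= c%:R by apply: ltW.
have key : (1 + e) * A / 2 * (1 + y) <= ((1 + e) * L%:R * mu + A) * y.
  have -> : ((1 + e) * L%:R * mu + A) * y = (1 + e) * (mu * (L%:R * y)) + A * y by ring.
  rewrite hLy hmuC.
  have : 0 <= (1 - e) * (A * y) by apply: mulr_ge0; [lra | apply: mulr_ge0].
  lra.
apply: (le_trans key); apply: ler_wpM2r => //.
Qed.

Lemma side_bound (R : realType) (m n : nat) (mu x k : R) (rho : 'I_n -> nat) (y0 : 'I_n) N :
  0 < mu -> 1 < x -> 0 <= k -> m%:R = mu * n%:R -> (1 <= n)%N -> rho y0 = 0%N ->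
  (forall L, (L <= N)%N -> #|[pred y | (rho y < L)%N]| = L) -> (1 <= N)%N ->
  #|[set f | hit (@Hd R m n mu x k rho) N f]|%:R <= n%:R ^+ m * expR (- (k / 4)).
Proof.
move=> hmu hx hk hm hn hy0 hcard hN.
have hC := CC_ge0 hmu hx hk.
have hNN : (1 <= N <= N)%N by rewrite hN leqnn.
have D := @doob R m n rho y0 (CC mu x k) (ttv x k) N hy0 hC hcard (@Hd R m n mu x k rho)
  (fun L hL => Hd_meas mu x k hy0 (proj1 (andP hL)))
  (fun L f hL hf => Hd_Z hmu hx hk (proj1 (andP hL)) hf) N hNN predT (fun f => erefl).
have E1 : \sum_(f : {ffun 'I_m -> 'I_n}) (predT f && hit (Hd mu x k rho) N f)%:R
   = #|[set f | hit (@Hd R m n mu x k rho) N f]|%:R :> R by rewrite sum_ind.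
have E2 : \sum_(f : {ffun 'I_m -> 'I_n}) (predT f)%:R * Zp rho (CC mu x k) N f = (n%:R + CC mu x k) ^+ m.
  by rewrite -(@sumZ R m n rho y0 (CC mu x k) N hN hcard); apply: eq_bigr => f _; rewrite mul1r.
rewrite E1 E2 in D.
have hn' : 0 < n%:R :> R by rewrite ltr0n.
have htt : 0 < ttv x k by apply: expR_gt0.
have B1 : (n%:R + CC mu x k) ^+ m <= n%:R ^+ m * expR (AA x k / 2).
  have -> : AA x k / 2 = m%:R * (CC mu x k / n%:R).
    rewrite hm /CC; field; apply/andP; split; lra.
  rewrite expRM_natl -exprMn; apply: lerXn2r; rewrite ?nnegrE.
  - by apply: addr_ge0 => //; apply: ler0n.
  - by apply: mulr_ge0; [apply: ler0n | apply: expR_ge0].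
  have := expR_ge1Dx (CC mu x k / n%:R).
  move=> h; have : n%:R * (1 + CC mu x k / n%:R) <= n%:R * expR (CC mu x k / n%:R).
    by apply: ler_wpM2l => //; apply: ltW.
  by rewrite mulrDr mulr1 mulrCA divff ?mulr1 // gt_eqF.
have : #|[set f | hit (@Hd R m n mu x k rho) N f]|%:R <= n%:R ^+ m * expR (AA x k / 2) / ttv x k.
  by rewrite ler_pdivlMr // mulrC; apply: (le_trans D).
move/le_trans; apply.
rewrite -mulrA /ttv -expRB; apply: ler_wpM2l; first by apply: exprn_ge0; apply: ltW.
rewrite ler_expR /AA.
have hx0 : x != 0 by rewrite gt_eqF //; lra.
have -> : x * k / 2 / 2 - (1 + x^-1) * (x * k / 2) / 2 = - (x^-1 * x) * k / 4 by field.
by rewrite mulVf // mulN1r mulNr.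
Qed.
Lemma card_range n lo hi : (hi <= n)%N ->
  #|[pred y : 'I_n | (lo <= y)%N && (y < hi)%N]| = (hi - lo)%N.
Proof.
move=> hhi.
rewrite -sum1_card big_mkcond /=.
rewrite -(big_mkord (fun _ => true) (fun i => if (lo <= i)%N && (i < hi)%N then 1%N else 0%N)) /=.
rewrite (big_cat_nat (n:=hi)) //=.
rewrite [X in (_ + X)%N]big1_seq ?addn0; last first.
  move=> i /andP[_]; rewrite mem_index_iota => /andP[h _].
  by rewrite ltnNge h andbF.
case: (leqP lo hi) => hlh.
  rewrite (big_cat_nat (n:=lo)) //= big1_seq ?add0n; last first.
    move=> i /andP[_]; rewrite mem_index_iota => /andP[_ h].
    by rewrite leqNgt h.
  rewrite (eq_big_seq (fun _ => 1%N)); last first.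
    by move=> i; rewrite mem_index_iota => ->.
  by rewrite sum_nat_const_nat muln1.
rewrite big1_seq; last first.
  move=> i /andP[_]; rewrite mem_index_iota => /andP[_ h].
  by rewrite leqNgt (ltn_trans h hlh).
by apply/esym/eqP; rewrite subn_eq0 ltnW.
Qed.
Lemma split_ind (a b j n y : nat) : (a <= j)%N -> (j <= b)%N -> (b < n)%N ->
  (((a <= y) && (y <= b))%N : nat) =
  ((((if (y <= j)%N then (j - y)%N else n) < j.+1 - a)%N : nat) +
   (((if (j < y)%N then (y - j.+1)%N else n) < b - j)%N : nat))%N.
Proof.
move=> haj hjb hbn.
case: (leqP y j) => hy /=.
  have -> : (n < b - j)%N = false by apply/negbTE; rewrite -leqNgt; lia.
  rewrite addn0; congr nat_of_bool.
  apply/idP/idP; [move=> /andP[h1 h2]; lia | move=> h; apply/andP; split; lia].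
have -> : (n < j.+1 - a)%N = false by apply/negbTE; rewrite -leqNgt; lia.
rewrite add0n; congr nat_of_bool.
apply/idP/idP; [move=> /andP[h1 h2]; lia | move=> h; apply/andP; split; lia].
Qed.

Lemma card_set_sum (m : nat) (P : pred 'I_m) : #|[set i | P i]| = (\sum_i (P i : nat))%N.
Proof.
rewrite -sum1_card [in LHS]big_mkcond /=; apply: eq_bigr => i _.
by rewrite inE; case: (P i).
Qed.

Lemma card_pred_sum (m : nat) (P : pred 'I_m) : #|[pred i | P i]| = (\sum_i (P i : nat))%N.
Proof.
rewrite -sum1_card [in LHS]big_mkcond /=; apply: eq_bigr => i _.
by rewrite inE; case: (P i).
Qed.

Lemma card_union3 (T : finType) (A B C : {set T}) : (#|A :|: B :|: C| <= #|A| + #|B| + #|C|)%N.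
Proof.
apply: (leq_trans (leq_addr #|(A :|: B) :&: C| _)); rewrite cardsUI leq_add2r.
by apply: (leq_trans (leq_addr #|A :&: B| _)); rewrite cardsUI.
Qed.

Unset Implicit Arguments.
Theorem mainTheorem3 (R : realType) (mu : R) (hmu : 0 < mu) :
  exists (c k0 : R), 0 < c /\
    forall (n m : nat) (x k : R) (j : 'I_n),
      m%:R = mu * n%:R -> 1 < x -> 1 <= k -> k0 <= k ->
      1 - (2 : R) `^ (- (c * k)) <= @balls_prob R m n (@all_intervals_ok R m n mu x k j).
Proof.
have hl2 : 0 < ln (2:R) by apply: ln_gt0; lra.
exists ((8 * ln 2)^-1), 8; split; first by rewrite invr_gt0; apply: mulr_gt0 => //; lra.
move=> n m x k j hm hx hk1 hk8.
have hn : (1 <= n)%N by case: j => j' /=; lia.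
have hk : 0 <= k by lra.
set e := expR (- (k / 4)).
pose rhoL := fun y : 'I_n => if (y <= j)%N then (j - y)%N else n.
have hyL : rhoL j = 0%N by rewrite /rhoL leqnn subnn.
have hcardL : forall L, (L <= j.+1)%N -> #|[pred y | (rhoL y < L)%N]| = L.
  move=> L hL.
  transitivity #|[pred y : 'I_n | (j.+1 - L <= y)%N && (y < j.+1)%N]|.
    2: by rewrite (card_range (j.+1 - L) (ltn_ord j)); lia.
  apply: eq_card => y; rewrite !inE /rhoL.
  have := ltn_ord y; have := ltn_ord j.
  case: (leqP y j) => h /= h1 h2; apply/idP/idP => H; lia.
have bL := side_bound hmu hx hk hm hn hyL hcardL (ltn0Sn _).
pose rhoR := fun y : 'I_n => if (j < y)%N then (y - j.+1)%N else n.
have bR : #|[set f | hit (@Hd R m n mu x k rhoR) (n - j.+1) f]|%:R <= n%:R ^+ m * e.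
  case: (ltnP j.+1 n) => hjn.
    have hyR : rhoR (Ordinal hjn) = 0%N by rewrite /rhoR /= ltnSn subnn.
    have hcardR : forall L, (L <= n - j.+1)%N -> #|[pred y | (rhoR y < L)%N]| = L.
      move=> L hL.
      transitivity #|[pred y : 'I_n | (j.+1 <= y)%N && (y < j.+1 + L)%N]|.
        2: by rewrite (card_range (n:=n) j.+1 (_ : (j.+1 + L <= n)%N)); lia.
      apply: eq_card => y; rewrite !inE /rhoR.
      have := ltn_ord y; have := ltn_ord j.
      by case: (ltnP j y) => h /= h1 h2; first [apply/idP/idP => H; lia | apply/negbTE; rewrite -leqNgt; lia].
    by apply: (side_bound hmu hx hk hm hn hyR hcardR); lia.
  have -> : (n - j.+1 = 0)%N by lia.
  have -> : [set f | hit (@Hd R m n mu x k rhoR) 0 f] = set0 by apply/setP => f; rewrite !inE.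
  by rewrite cards0 mulr_ge0 // ?exprn_ge0 ?expR_ge0.
set HL := @Hd R m n mu x k rhoL.
set HR := @Hd R m n mu x k rhoR.
have incl : forall f, ~~ hit HL j.+1 f -> ~~ hit HR (n - j.+1) f -> all_intervals_ok mu x k j f.
  move=> f hL hR; apply/forallP => a; apply/forallP => b; apply/implyP => /andP[haj hjb].
  move/hasPn: hL => hL; move/hasPn: hR => hR.
  have L1 := hL (j.+1 - a)%N; rewrite mem_iota in L1.
  have {}L1 := L1 (ltac:(apply/andP; split; lia)).
  rewrite /HL /Hd -leNgt in L1.
  have hb := ltn_ord b.
  have hcR : (cntr rhoR (b - j) f)%:R <= (1 + x^-1) * (b - j)%:R * mu + AA x k :> R.
    case: (posnP (b - j)%N) => hb0.
      rewrite hb0 mulr0 mul0r add0r /cntr.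
      have -> : #|[pred i | (rhoR (f i) < 0)%N]| = 0%N by apply: eq_card0 => i; rewrite inE.
      by rewrite /AA; apply: divr_ge0; [apply: mulr_ge0|]; lra.
    have L2 := hR (b - j)%N; rewrite mem_iota in L2.
    have {}L2 := L2 (ltac:(apply/andP; split; lia)).
    by rewrite /HR /Hd -leNgt in L2.
  have hload : load f a b = (cntr rhoL (j.+1 - a) f + cntr rhoR (b - j) f)%N.
    rewrite /load /cntr card_set_sum !card_pred_sum -big_split /=.
    apply: eq_bigr => i _; apply: split_ind => //.
  rewrite hload natrD.
  apply: (le_trans (lerD L1 hcR)).
  have -> : (b - a + 1)%:R = (j.+1 - a)%:R + (b - j)%:R :> R by rewrite -natrD; congr _%:R; lia.
  rewrite /AA; lra.
pose OK := [set f : {ffun 'I_m -> 'I_n} | all_intervals_ok mu x k j f].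
pose SL := [set f | hit HL j.+1 f].
pose SR := [set f | hit HR (n - j.+1) f].
have cover : (n ^ m <= #|OK| + #|SL| + #|SR|)%N.
  have : [set: {ffun 'I_m -> 'I_n}] \subset OK :|: SL :|: SR.
    apply/subsetP => f _; rewrite !inE.
    case E1: (hit HL j.+1 f); case E2: (hit HR (n - j.+1) f); rewrite ?orbT //= !orbF.
    by apply: incl; rewrite ?E1 ?E2.
  move/subset_leq_card; rewrite cardsT card_ffun !card_ord => h.
  exact: (leq_trans h (card_union3 _ _ _)).
have coverR : n%:R ^+ m <= #|OK|%:R + #|SL|%:R + #|SR|%:R :> R.
  by rewrite -natrX -!natrD ler_nat.
have hT : 0 < n%:R ^+ m :> R by apply: exprn_gt0; rewrite ltr0n.
rewrite /balls_prob card_ffun !card_ord natrX.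
have he : 2 * e <= 2 `^ (- ((8 * ln 2)^-1 * k)).
  rewrite /powR (negbTE (_ : (2:R) != 0)); last by rewrite pnatr_eq0.
  have -> : - ((8 * ln 2)^-1 * k) * ln 2 = - (k / 8) by field; lra.
  have -> : e = expR (- (k / 8)) * expR (- (k / 8)) by rewrite /e -expRD; congr expR; lra.
  rewrite mulrA ler_piMl ?expR_ge0 //.
  rewrite expRN -[X in X * _]mulr1 ler_pdivrMr ?expR_gt0 // mulrC mul1r.
  have := expR_ge1Dx (k / 8); lra.
have hSL : #|SL|%:R <= n%:R ^+ m * e by exact: bL.
have hSR : #|SR|%:R <= n%:R ^+ m * e by exact: bR.
have hOK : n%:R ^+ m * (1 - 2 * e) <= #|OK|%:R by nra.
apply: (le_trans (_ : _ <= 1 - 2 * e)); first lra.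
by rewrite ler_pdivlMr // mulrC; exact: hOK.
Qed.
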